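(* For every $\pi\in\Pi$, $x\in S$, $\alpha\in(0,1]$ and $\gamma\ge 1$, $$\mathrm{CVaR}^\pi_{\alpha,x}\Big(\max_{t=0,1,\dots,T} g_K(X_t)\Big) \le \frac{1}{\gamma}\log\Big(\frac{1}{\alpha}E_x^\pi\Big(\sum_{t=0}^T e^{\gamma g_K(X_t)}\Big)\Big).$$
   Context: Setting: $S$, $A$, $W$ are Borel spaces (states, controls, disturbances), $T\in\mathbb{N}$. The sample space is $\Omega = (S\times A)^T\times S$ with its Borel $\sigma$-algebra $\mathcal{B}(\Omega)$; for $\omega=(x_0,u_0,\dots,x_{T-1},u_{T-1},x_T)$, $X_t(\omega)=x_t$ and $U_t(\omega)=u_t$. A Borel-measurable map $f:S\times A\times W\to S$ and a probability distribution $P_D$ on $W$ define the transition kernel $Q(B\mid x,u) = P_D(\{d\in W: f(x,u,d)\in B\})$ for $B\in\mathcal{B}(S)$. $\Pi$ is the set of randomized history-dependent policies $\pi=(\pi_0,\dots,\pi_{T-1})$, each $\pi_t$ a Borel-measurable stochastic kernel on $A$ given $H^t=(S\times A)^t\times S$. For $x\in S$, $\pi\in\Pi$, $P_x^\pi$ is the unique probability measure on $(\Omega,\mathcal{B}(\Omega))$ (Ionescu-Tulcea) under which $X_0=x$, $U_t$ is distributed according to $\pi_t(\cdot\mid X_0,U_0,\dots,X_t)$, and $X_{t+1}$ is distributed according to $Q(\cdot\mid X_t,U_t)$; $E_x^\pi$ denotes expectation under $P_x^\pi$. A constraint set $K\in\mathcal{B}(S)$ and a bounded Borel-measurable $g_K:S\to\mathbb{R}$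 are given. For a probability space $(\Omega,\mathcal{F},\mu)$, $Y\in L^1$ and $\alpha\in(0,1]$, $\mathrm{CVaR}_\alpha(Y) := \inf_{s\in\mathbb{R}}\big(s + \tfrac{1}{\alpha}E(\max(Y-s,0))\big)$. $\mathrm{CVaR}^\pi_{\alpha,x}$ denotes CVaR computed with respect to $P_x^\pi$. *)

(* Defs.v *)
From HB Require Import structures.
From mathcomp Require Import all_boot all_order all_algebra.
From mathcomp Require Import all_classical all_reals all_analysis.
Set Implicit Arguments. Unset Strict Implicit. Unset Printing Implicit Defensive.
Import Order.TTheory GRing.Theory Num.Theory.
Local Open Scope classical_set_scope.
Local Open Scope ring_scope.

Section mdp.
Context {dS dA dW : measure_display} (S : measurableType dS)
  (A : measurableType dA) (W : measurableType dW) (R : realType) (T : nat).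

Definition Omega := (T.-tuple (S * A) * S)%type.
Definition Hist (t : nat) := (t.-tuple (S * A) * S)%type.

(* coordinate processes (X_t for t <= T, U_t for t < T) *)
Definition Xproc (t : nat) (w : Omega) : S :=
  if (t < T)%N then (nth point (val w.1) t).1 else w.2.
Definition Uproc (t : nat) (w : Omega) : A := (nth point (val w.1) t).2.
Definition Hproc (t : nat) (w : Omega) : Hist t :=
  ([tuple nth point (val w.1) i | i < t], Xproc t w).

Definition Qker (f : (S * A * W)%type -> S) (PD : probability W R)
  (x : S) (u : A) (B : set S) : \bar R :=
  PD [set d | B (f (x, u, d))].

Definition policy := forall t : 'I_T, R.-pker (Hist t) ~> A.

(* P is the Ionescu-Tulcea measure P_x^pi: X_0 = x a.s.; conditional law of
   U_t given the history H_t is pi_t(.|H_t); conditional law of X_{t+1} given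
   (H_t,U_t) is Q(.|X_t,U_t).  (Stated on measurable rectangles, which form a
   pi-system generating the relevant product sigma-algebras.) *)
Definition is_ITmeasure (f : (S * A * W)%type -> S) (PD : probability W R)
  (x : S) (pi : policy) (P : probability Omega R) : Prop :=
  [/\ (forall B : set S, measurable B ->
        P (Xproc 0 @^-1` B) = (\1_B x)%:E),
      (forall (t : 'I_T) (B : set (Hist t)) (C : set A),
        measurable B -> measurable C ->
        P (Hproc t @^-1` B `&` Uproc t @^-1` C) =
        (\int[P]_(w in Hproc t @^-1` B) pi t (Hproc t w) C)%E) &
      (forall (t : 'I_T) (B : set (Hist t)) (C : set A) (D : set S),
        measurable B -> measurable C -> measurable D ->
        P (Hproc t @^-1` B `&` Uproc t @^-1` C `&` Xproc t.+1 @^-1` D) =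
        (\int[P]_(w in Hproc t @^-1` B `&` Uproc t @^-1` C)
            Qker f PD (Xproc t w) (Uproc t w) D)%E)].

End mdp.

Definition CVaR {d} {Om : measurableType d} {R : realType}
  (P : probability Om R) (alpha : R) (Y : Om -> R) : \bar R :=
  ereal_inf [set (s%:E + (alpha^-1)%:E *
                  \int[P]_w (Num.max (Y w - s) 0)%:E)%E | s in [set: R]].

(* Main.v *)
Require Import Defs.
From HB Require Import structures.
From mathcomp Require Import all_boot all_order all_algebra.
From mathcomp Require Import all_classical all_reals all_analysis.
From mathcomp Require Import measurable_realfun ring lra.
Import Order.TTheory GRing.Theory Num.Theory.
Local Open Scope classical_set_scope.
Local Open Scope ring_scope.

Lemma mXproc {dS dA : measure_display} (S : measurableType dS)
  (A : measurableType dA) (T t : nat) :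
  measurable_fun [set: Omega S A T] (Xproc t).
Proof.
rewrite /Xproc; case: ltnP => h; last exact: measurable_snd.
have -> : (fun w : Omega S A T => (nth point (val w.1) t).1) =
  (fun w => (tnth w.1 (Ordinal h)).1).
  by apply/funext => w; rewrite (tnth_nth point).
apply: measurableT_comp; first exact: measurable_fst.
exact: (measurableT_comp (measurable_tnth (Ordinal h)) measurable_fst).
Qed.

Theorem theorem1 {dS dA dW : measure_display} (S : measurableType dS)
  (A : measurableType dA) (W : measurableType dW) (R : realType) (T : nat)
  (f : (S * A * W)%type -> S) (mf : measurable_fun [set: S * A * W] f)
  (PD : probability W R)
  (K : set S) (mK : measurable K)
  (gK : S -> R) (mg : measurable_fun [set: S] gK)
  (bg : exists M : R, forall y, `|gK y| <= M)
  (pi : policy S A R T) (x : S) (P : probability (Omega S A T) R)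
  (HP : is_ITmeasure f PD x pi P)
  (alpha gamma : R) (ha : 0 < alpha <= 1) (hg : 1 <= gamma) :
  (CVaR P alpha
     (fun w => \big[Num.max/gK (Xproc 0 w)]_(t < T.+1) gK (Xproc t w))
   <= (gamma^-1 * ln (alpha^-1 *
         fine (\int[P]_w (\sum_(t < T.+1) expR (gamma * gK (Xproc t w)))%:E)))%:E)%E.
Proof.
case: bg => M hM.
move/andP: ha => [a0 a1].
have g0 : 0 < gamma by apply: lt_le_trans hg.
pose G : nat -> Omega S A T -> R := fun t w => gK (Xproc t w).
have mG : forall t, measurable_fun [set: Omega S A T] (G t).
  by move=> t; apply: measurableT_comp => //; exact: mXproc.
pose Y : Omega S A T -> R := fun w => \big[Num.max/gK (Xproc 0 w)]_(t < T.+1) gK (Xproc t w).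
have mY : measurable_fun [set: Omega S A T] Y.
  suff H : forall r : seq 'I_T.+1, measurable_fun [set: Omega S A T]
      (fun w => \big[Num.max/G 0%N w]_(t <- r) G t w) by exact: H.
  elim=> [|a r IH].
    rewrite (_ : (fun w => _) = G 0%N); first exact: mG.
    by apply/funext => w /=; rewrite big_nil.
  rewrite (_ : (fun w => _) = (fun w => Num.max (G a w) (\big[Num.max/G 0%N w]_(t <- r) G t w))).
    exact: measurable_maxr.
  by apply/funext => w /=; rewrite big_cons.
pose Sg : Omega S A T -> R := fun w => \sum_(t < T.+1) expR (gamma * gK (Xproc t w)).
have mSg : measurable_fun [set: Omega S A T] Sg.
  apply: measurable_sum => t; apply: measurableT_comp => //.
  by apply: measurable_funM => //; exact: mG.
have Sg0 : forall w, 0 <= Sg w by move=> w; apply: sumr_ge0 => t _; exact: expR_ge0.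
have termle : forall w (t : 'I_T.+1), expR (gamma * G t w) <= Sg w.
  move=> w t; rewrite /Sg (bigD1 t) //= lerDl.
  by apply: sumr_ge0 => i _; exact: expR_ge0.
have YSg : forall w, expR (gamma * Y w) <= Sg w.
  move=> w; rewrite /Y; apply: (big_ind (fun v => expR (gamma * v) <= Sg w)).
  - exact: (termle w ord0).
  - by move=> u v hu hv; case: (leP u v) => _.
  - by move=> i _; exact: (termle w i).
have GM : forall t w, - M <= G t w <= M by move=> t w; rewrite -ler_norml; exact: hM.
pose C := expR (gamma * M) *+ T.+1.
have SgM : forall w, Sg w <= C.
  move=> w; rewrite /C -(card_ord T.+1) -sumr_const; apply: ler_sum => t _.
  rewrite ler_expR; apply: ler_wpM2l; first exact: ltW.
  by case/andP: (GM t w).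
pose c0 := expR (- (gamma * M)).
have c00 : 0 < c0 by exact: expR_gt0.
have Sgc0 : forall w, c0 <= Sg w.
  move=> w; apply: le_trans (termle w ord0); rewrite ler_expR -mulrN.
  apply: ler_wpM2l; first exact: ltW.
  by case/andP: (GM 0%N w).
have mSgE : measurable_fun [set: Omega S A T] (fun w => (Sg w)%:E).
  exact: measurableT_comp.
have P1 : P [set: Omega S A T] = 1%E := probability_setT P.
pose I := (\int[P]_w (Sg w)%:E)%E.
have IC : (I <= C%:E)%E.
  apply: (@le_trans _ _ (\int[P]_w (cst C%:E) w)%E).
    apply: ge0_le_integral => //.
    - by move=> w _; rewrite lee_fin.
    - by move=> w _; rewrite lee_fin.
  by rewrite integral_cst // -[X in (_ * X <= _)%E]/(P [set: Omega S A T]) P1 mule1.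
have Ic0 : (c0%:E <= I)%E.
  apply: (@le_trans _ _ (\int[P]_w (cst c0%:E) w)%E).
    by rewrite integral_cst // -[X in (_ <= _ * X)%E]/(P [set: Omega S A T]) P1 mule1.
  apply: ge0_le_integral => //.
  - by move=> w _; rewrite lee_fin ltW.
  - by move=> w _; rewrite lee_fin.
have Ifin : I \is a fin_num.
  rewrite fin_numElt; apply/andP; split.
    exact: (lt_le_trans (ltNyr _) Ic0).
  exact: (le_lt_trans IC (ltry _)).
pose m := fine I.
have Im : I = m%:E by rewrite /m fineK.
have m0 : 0 < m by rewrite -lte_fin -Im; exact: lt_le_trans Ic0.
change (CVaR P alpha Y <= (gamma^-1 * ln (alpha^-1 * m))%:E)%E.
pose M' := alpha^-1 * m.
have M'0 : 0 < M' by rewrite mulr_gt0 // invr_gt0.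
pose s := (ln M' - 1) / gamma.
apply: (@le_trans _ _ (s%:E + (alpha^-1)%:E * \int[P]_w (Num.max (Y w - s) 0)%:E)%E).
  by apply: ereal_inf_lbound; exists s.
pose k := expR (- (gamma * s) - 1) / gamma.
have k0 : 0 <= k by rewrite divr_ge0 // ?expR_ge0 // ltW.
have key : forall w, Num.max (Y w - s) 0 <= k * Sg w.
  move=> w; rewrite ge_max; apply/andP; split; last first.
    by rewrite mulr_ge0.
  apply: (@le_trans _ _ (expR (gamma * (Y w - s) - 1) / gamma)).
    rewrite ler_pdivlMr // mulrC.
    by have := expR_ge1Dx (gamma * (Y w - s) - 1); rewrite addrC subrK.
  rewrite (_ : gamma * (Y w - s) - 1 = gamma * Y w + (- (gamma * s) - 1)); last first.
    by rewrite mulrBr addrA.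
  rewrite expRD /k [leRHS]mulrC -mulrA; apply: ler_wpM2r; last exact: YSg.
  by rewrite divr_ge0 // ?expR_ge0 // ltW.
have J : (\int[P]_w (Num.max (Y w - s) 0)%:E <= (alpha / gamma)%:E)%E.
  apply: (@le_trans _ _ (\int[P]_w (k%:E * (Sg w)%:E))%E).
    apply: ge0_le_integral => //.
    - by move=> w _; rewrite lee_fin le_max lexx orbT.
    - apply: measurableT_comp => //; apply: measurable_maxr => //.
      exact: measurable_funB.
    - by apply: measurable_funeM.
    - by move=> w _; rewrite -EFinM lee_fin.
  rewrite ge0_integralZl_EFin //; last by move=> w _; rewrite lee_fin.
  rewrite -/I Im -EFinM lee_fin le_eqVlt; apply/orP; left; apply/eqP.
  rewrite /k (_ : - (gamma * s) - 1 = - ln M'); last first.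
    by rewrite /s mulrC divfK ?gt_eqF //; ring.
  rewrite expRN lnK ?posrE // /M'.
  by field; rewrite ?gt_eqF.
apply: (@le_trans _ _ (s%:E + (alpha^-1)%:E * (alpha / gamma)%:E)%E).
  by apply: leeD2l; apply: lee_wpmul2l => //; rewrite lee_fin invr_ge0 ltW.
rewrite -EFinM -EFinD lee_fin le_eqVlt; apply/orP; left; apply/eqP.
by rewrite /s /M'; field; rewrite ?gt_eqF.
Qed.
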